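(* Let $F\subset S^{2n-1}$ be nonempty. If $\{\lambda_1,\dots,\lambda_n\}$ is linearly independent over $\mathbb{Z}$, then every point $w=(w_1,\dots,w_n)\in\bar F$ with $w_k\ne0$ for all $k$ generates a nonsparse leaf of $S^X_0(F)$. Conversely, if $\{\lambda_1,\dots,\lambda_n\}$ is linearly dependent over $\mathbb{Z}$, then there exists a set $G\subset S^{2n-1}$ such that $S^X_0(G)$ has no nonsparse leaf and $S^X_0(G)$ contains the point $\big(e^{-\lambda_1}/\sqrt n,\dots,e^{-\lambda_n}/\sqrt n\big)$.
   Context: Fix $n\ge1$ and $\lambda=(\lambda_1,\dots,\lambda_n)$ with $\lambda_1=1$, $\lambda_k>0$ for all $k$. For $z\in\mathbb{C}^n$, $t\in\mathbb{C}$ put $\Phi^X(z,t)=(z_1e^{-\lambda_1t},\dots,z_ne^{-\lambda_nt})$; $\mathbb{H}=\{\operatorname{Re}t>0\}$; $S^{2n-1}$ the unit sphere in $\mathbb{C}^n$. $S^X_0(F)=\{\Phi^X(z,t):z\in F,t\in\mathbb{H}\}$; for $z\in\bar F$ its leaf is $L_z=\{\Phi^X(z,t):t\in\mathbb{H}\}$, generated by $z$. A polynomial $q\in\mathbb{C}[z,\bar z]$ is quasi-homogeneous of type $\lambda$ with bidegree $(d_1,d_2)$ if $q(\Phi^X(z,t))=e^{-d_1t}e^{-d_2\bar t}q(z)$ for all $t\in\mathbb{H}$, $z\in\mathbb{C}^n$; $\mathcal{H}_\lambda$ is the set of such polynomials. The leaf $L_z$, $z\in\bar F$, is nonsparse if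 for every open neighborhood $U\subset S^{2n-1}$ of $z$ and every $q\in\mathcal{H}_\lambda$ of bidegree $(d_1,d_2)$ with $d_2\ne0$ and $\bar F\cap U\subset\{q=0\}$, one has $q\equiv0$ on $\mathbb{C}^n$. *)

(* Defs.v *)
From Stdlib Require Import Reals ZArith.
From Coquelicot Require Import Complex.
From mathcomp Require Import ssreflect ssrbool ssrfun eqtype ssrnat seq fintype bigop.

Set Implicit Arguments.
Unset Strict Implicit.

Local Open Scope R_scope.
Local Open Scope C_scope.

Definition cexp (t : C) : C := (exp (fst t) * cos (snd t), exp (fst t) * sin (snd t))%R.

Definition Cn (n : nat) := 'I_n -> C.

Definition sumR (n : nat) (f : 'I_n -> R) : R := \big[Rplus/0%R]_(k < n) f k.
Definition prodC (n : nat) (f : 'I_n -> C) : C := \big[Cmult/RtoC 1]_(k < n) f k.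

Definition normsq (n : nat) (z : Cn n) : R := sumR (fun k => (Cmod (z k) ^ 2)%R).
Definition distC (n : nat) (z w : Cn n) : R := sqrt (normsq (fun k => z k - w k)).

Definition sphere (n : nat) (z : Cn n) : Prop := normsq z = 1%R.

Definition closure (n : nat) (F : Cn n -> Prop) (z : Cn n) : Prop :=
  forall eps : R, (0 < eps)%R -> exists x, F x /\ (distC x z < eps)%R.
Definition openC (n : nat) (V : Cn n -> Prop) : Prop :=
  forall z, V z -> exists eps : R, (0 < eps)%R /\ forall x, (distC x z < eps)%R -> V x.

Definition Hplane (t : C) : Prop := (0 < fst t)%R.

Definition Phi (n : nat) (lam : 'I_n -> R) (z : Cn n) (t : C) : Cn n :=
  fun k => z k * cexp (- RtoC (lam k) * t).

Definition S0 (n : nat) (lam : 'I_n -> R) (F : Cn n -> Prop) (p : Cn n) : Prop :=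
  exists z t, F z /\ Hplane t /\ p = Phi lam z t.

(* polynomials in C[z, zbar]: finite lists of monomials c z^a zbar^b *)
Definition cpoly (n : nat) := seq (C * (('I_n -> nat) * ('I_n -> nat))).

Definition eval_mono (n : nat) (m : C * (('I_n -> nat) * ('I_n -> nat))) (z : Cn n) : C :=
  m.1 * prodC (fun k => Cpow (z k) (m.2.1 k) * Cpow (Cconj (z k)) (m.2.2 k)).

Definition evalp (n : nat) (q : cpoly n) (z : Cn n) : C :=
  foldr (fun m acc => eval_mono m z + acc) (RtoC 0) q.

Definition quasi_hom (n : nat) (lam : 'I_n -> R) (q : cpoly n) (d1 d2 : R) : Prop :=
  forall t z, Hplane t ->
    evalp q (Phi lam z t) = cexp (- RtoC d1 * t) * cexp (- RtoC d2 * Cconj t) * evalp q z.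

(* the leaf L_z (z in closure F) is nonsparse.  Open neighbourhoods U of z in
   S^{2n-1} are exactly the sets V ∩ S^{2n-1} with V open in C^n, V z. *)
Definition nonsparse (n : nat) (lam : 'I_n -> R) (F : Cn n -> Prop) (z : Cn n) : Prop :=
  forall V : Cn n -> Prop, openC V -> V z ->
  forall (q : cpoly n) (d1 d2 : R), quasi_hom lam q d1 d2 -> d2 <> 0%R ->
    (forall x, closure F x -> sphere x -> V x -> evalp q x = RtoC 0) ->
    forall x, evalp q x = RtoC 0.

Definition Z_indep (n : nat) (lam : 'I_n -> R) : Prop :=
  forall m : 'I_n -> Z, sumR (fun k => (IZR (m k) * lam k)%R) = 0%R -> forall k, m k = 0%Z.

(* Main.v *)
Require Import Defs.
From Stdlib Require Import Reals ZArith Lra Lia.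
From Coquelicot Require Import Complex.
From mathcomp Require Import ssreflect ssrbool ssrfun eqtype ssrnat seq fintype bigop.
From Stdlib Require List.
From Stdlib Require Import FunctionalExtensionality.

Set Implicit Arguments.
Unset Strict Implicit.
Local Open Scope R_scope.
Local Open Scope C_scope.

Lemma Ceq (a b : C) : fst a = fst b -> snd a = snd b -> a = b.
Proof. destruct a, b; simpl; intros -> ->; reflexivity. Qed.

Lemma cexp_add a b : cexp (a + b) = cexp a * cexp b.
Proof.
destruct a as [x y], b as [u v]; unfold cexp; simpl.
apply Ceq; simpl; rewrite exp_plus ?cos_plus ?sin_plus; ring.
Qed.

Lemma cexp_conj a : Cconj (cexp a) = cexp (Cconj a).
Proof.
destruct a as [x y]; unfold cexp, Cconj; simpl.
apply Ceq; simpl; rewrite ?cos_neg ?sin_neg; ring.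
Qed.

Lemma cexp0 : cexp (RtoC 0) = RtoC 1.
Proof. unfold cexp; apply Ceq; simpl; rewrite ?exp_0 ?cos_0 ?sin_0; ring. Qed.

Lemma cexp_pow a j : Cpow (cexp a) j = cexp (RtoC (INR j) * a).
Proof.
induction j as [|j IH].
- simpl. replace (RtoC 0 * a) with (RtoC 0) by ring. by rewrite cexp0.
- rewrite Cpow_S IH -cexp_add. f_equal. rewrite S_INR. apply Ceq; simpl; ring.
Qed.

Lemma Cmod_cexp a : Cmod (cexp a) = exp (fst a).
Proof.
destruct a as [x y]; unfold Cmod, cexp; simpl.
replace ((exp x * cos y) * ((exp x * cos y) * 1) + (exp x * sin y) * ((exp x * sin y) * 1))%R
  with (exp x * exp x * (Rsqr (sin y) + Rsqr (cos y)))%R by (unfold Rsqr; ring).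
rewrite sin2_cos2 Rmult_1_r. apply sqrt_square. left; apply exp_pos.
Qed.

Lemma cexp_nz a : cexp a <> RtoC 0.
Proof.
intro H. have := Cmod_cexp a. rewrite H Cmod_0 => E. have := exp_pos (fst a). lra.
Qed.

Lemma cexp_inj a b : cexp a = cexp b -> fst a = fst b /\ sin (snd a - snd b) = 0%R.
Proof.
intro H. have E : fst a = fst b.
{ apply exp_inv. rewrite -!Cmod_cexp H //. }
split => //. destruct a as [x y], b as [u v]; simpl in *; subst u.
unfold cexp in H; simpl in H. injection H => H2 H1.
have ex := exp_pos x.
have c : cos y = cos v by apply (Rmult_eq_reg_l (exp x)); lra.
have s : sin y = sin v by apply (Rmult_eq_reg_l (exp x)); lra.
rewrite sin_minus c s. ring.
Qed.
Lemma prodC_mul n (f g : 'I_n -> C) : prodC (fun k => f k * g k) = prodC f * prodC g.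
Proof.
unfold prodC. apply (big_rec3 (fun a b c => a = b * c)).
- ring.
- move=> i y1 y2 y3 _ ->. ring.
Qed.

Lemma prodC_cexp n (r : 'I_n -> R) (t : C) :
  prodC (fun k => cexp (- RtoC (r k) * t)) = cexp (- RtoC (sumR r) * t).
Proof.
unfold prodC, sumR. apply (big_rec2 (fun a b => a = cexp (- RtoC b * t))).
- replace (- RtoC 0 * t) with (RtoC 0) by (apply Ceq; simpl; ring). by rewrite cexp0.
- move=> i y1 y2 _ ->. rewrite -cexp_add. f_equal. apply Ceq; simpl; ring.
Qed.

Lemma prodC_nz n (f : 'I_n -> C) : (forall k, f k <> RtoC 0) -> prodC f <> RtoC 0.
Proof.
move=> H. unfold prodC. apply (big_rec (fun a => a <> RtoC 0)).
- intro E; injection E; lra.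
- move=> i x _ Hx. by apply Cmult_neq_0.
Qed.

Lemma sumR_ge0 n (f : 'I_n -> R) : (forall k, 0 <= f k)%R -> (0 <= sumR f)%R.
Proof.
move=> H. unfold sumR. apply (big_rec (fun a => 0 <= a)%R); first lra.
move=> i x _ Hx. have := H i. lra.
Qed.
From HB Require Import structures.
Lemma RplusA : associative Rplus. Proof. move=> *; ring. Qed.
HB.instance Definition _ := Monoid.isComLaw.Build R 0%R Rplus RplusA Rplus_comm Rplus_0_l.

Lemma sumR_term n (f : 'I_n -> R) j : (forall k, 0 <= f k)%R -> (f j <= sumR f)%R.
Proof.
move=> H. unfold sumR. rewrite (bigD1 j) //=.
match goal with |- (_ <= _ + ?S)%R => have : (0 <= S)%R end.
{ apply (big_rec (fun a => 0 <= a)%R); first lra. move=> i x _ Hx. have := H i. lra. }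
lra.
Qed.

Lemma Cmod_le_dist n (x w : Cn n) k : (Cmod (Cminus (x k) (w k)) <= distC x w)%R.
Proof.
unfold distC. have H0 := Cmod_ge_0 (Cminus (x k) (w k)). rewrite -(sqrt_pow2 _ H0).
apply sqrt_le_1_alt. unfold normsq.
apply (@sumR_term n (fun k => Cmod (Cminus (x k) (w k)) ^ 2)%R). move=> i; apply pow2_ge_0.
Qed.
Definition wt n (lam : 'I_n -> R) (a : 'I_n -> nat) : R := sumR (fun k => (lam k * INR (a k))%R).


Lemma term_Phi (l : R) (a b : nat) (zk t : C) :
  Cpow (zk * cexp (- RtoC l * t)) a * Cpow (Cconj (zk * cexp (- RtoC l * t))) b
  = (Cpow zk a * Cpow (Cconj zk) b) *
    (cexp (- RtoC (l * INR a) * t) * cexp (- RtoC (l * INR b) * Cconj t)).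
Proof.
rewrite Cmult_conj cexp_conj !Cpow_mult_l !cexp_pow.
have E1 : RtoC (INR a) * (- RtoC l * t) = - RtoC (l * INR a) * t.
{ apply Ceq; simpl; ring. }
have E2 : RtoC (INR b) * Cconj (- RtoC l * t) = - RtoC (l * INR b) * Cconj t.
{ apply Ceq; simpl; ring. }
rewrite E1 E2. ring.
Qed.

Lemma mono_Phi n (lam : 'I_n -> R) m (z : Cn n) t :
  eval_mono m (Phi lam z t) =
  eval_mono m z * cexp (- RtoC (wt lam m.2.1) * t) * cexp (- RtoC (wt lam m.2.2) * Cconj t).
Proof.
unfold eval_mono, Phi, wt.
have -> : (fun k => Cpow (z k * cexp (- RtoC (lam k) * t)) (m.2.1 k) *
                   Cpow (Cconj (z k * cexp (- RtoC (lam k) * t))) (m.2.2 k)) =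
          (fun k => (Cpow (z k) (m.2.1 k) * Cpow (Cconj (z k)) (m.2.2 k)) *
             (cexp (- RtoC (lam k * INR (m.2.1 k)) * t) * cexp (- RtoC (lam k * INR (m.2.2 k)) * Cconj t))).
{ apply functional_extensionality => k. apply term_Phi. }
rewrite prodC_mul [prodC (fun k => cexp _ * cexp _)]prodC_mul.
have H1 := @prodC_cexp n (fun k => lam k * INR (m.2.1 k))%R t.
have H2 := @prodC_cexp n (fun k => lam k * INR (m.2.2 k))%R (Cconj t).
cbv beta in H1, H2. rewrite H1 H2.
ring.
Qed.
Definition sumL {T} (l : seq T) (f : T -> C) : C :=
  foldr (fun m acc => f m + acc) (RtoC 0) l.

Lemma evalpE n (q : cpoly n) z : evalp q z = sumL q (fun m => eval_mono m z).
Proof. reflexivity. Qed.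

Lemma sumL_ext {T} (l : seq T) f g :
  (forall m, List.In m l -> f m = g m) -> sumL l f = sumL l g.
Proof.
elim: l => [|h t IH] H //=. rewrite H; last by left. rewrite IH // => m Hm; apply H; by right.
Qed.

Lemma sumL_zero {T} (l : seq T) f : (forall m, List.In m l -> f m = RtoC 0) -> sumL l f = RtoC 0.
Proof.
elim: l => [|h t IH] H //=. rewrite H; last by left. rewrite IH; first ring. move=> m Hm; apply H; by right.
Qed.

Lemma sumL_scal {T} (l : seq T) a f : sumL l (fun m => a * f m) = a * sumL l f.
Proof. elim: l => [|h t IH] /=; first ring. rewrite IH; ring. Qed.

Lemma sumL_sub {T} (l : seq T) f g : sumL l (fun m => f m - g m) = sumL l f - sumL l g.
Proof. elim: l => [|h t IH] /=; first ring. rewrite IH; ring. Qed.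

Lemma sumL_split {T} (l : seq T) (p : T -> bool) f :
  sumL l f = sumL (List.filter p l) f + sumL (List.filter (fun x => negb (p x)) l) f.
Proof.
elim: l => [|h t IH] /=; first ring. rewrite IH. case: (p h) => /=; ring.
Qed.

Definition Ceqb (a b : C) : bool :=
  if Req_EM_T (fst a) (fst b) then (if Req_EM_T (snd a) (snd b) then true else false) else false.

Lemma Ceqb_spec a b : Ceqb a b = true <-> a = b.
Proof.
unfold Ceqb. destruct (Req_EM_T _ _) as [e1|e1]; destruct (Req_EM_T _ _) as [e2|e2];
split => // H; try (by apply Ceq); subst; congruence.
Qed.

Lemma length_filter {T} (p : T -> bool) (l : seq T) : (List.length (List.filter p l) <= List.length l)%coq_nat.
Proof. elim: l => [|h t IH] /=; first lia. case: (p h) => /=; lia. Qed.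

Lemma vdm {T} N : forall (l : seq T) (c z d : T -> C),
  (List.length l <= N)%coq_nat ->
  (forall m, List.In m l -> z m <> RtoC 0) ->
  (forall m m', List.In m l -> List.In m' l -> z m = z m' -> d m = d m') ->
  (forall j, sumL l (fun m => c m * Cpow (z m) (S j)) = RtoC 0) ->
  sumL l (fun m => c m * d m) = RtoC 0.
Proof.
elim: N => [|N IH] l c z d Hlen Hz Hd Hs.
{ destruct l; simpl in *; [reflexivity|lia]. }
destruct l as [|h t]; first reflexivity.
set z0 := z h.
set p := fun m => negb (Ceqb (z m) z0).
set t' := List.filter p (h :: t).
set u := List.filter (fun x => negb (p x)) (h :: t).
have Ht' : forall m, List.In m t' -> List.In m (h :: t) /\ z m - z0 <> RtoC 0.
{ move=> m /List.filter_In [Hm Hp]. split => //. intro E. move: Hp; rewrite /p.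
  have -> : z m = z0 by (apply Ceq; [have := f_equal fst E | have := f_equal snd E]; simpl; lra).
  have -> : Ceqb z0 z0 = true by apply Ceqb_spec. done. }
have Hu : forall m, List.In m u -> List.In m (h :: t) /\ z m = z0.
{ move=> m /List.filter_In [Hm Hp]. split => //. move: Hp; rewrite /p negbK; by move/Ceqb_spec. }
have Hlt : (List.length t' <= N)%coq_nat.
{ have ph : p h = false.
  { rewrite /p /z0. have -> : Ceqb (z h) (z h) = true by apply Ceqb_spec. done. }
  rewrite /t' /= ph. simpl in Hlen. have := length_filter p t. lia. }
set c' := fun m => c m * (z m - z0).
have Hs' : forall j, sumL t' (fun m => c' m * Cpow (z m) (S j)) = RtoC 0.
{ move=> j.
  have E : sumL (h :: t) (fun m => c' m * Cpow (z m) (S j)) = RtoC 0.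
  { rewrite (sumL_ext (g := fun m => c m * Cpow (z m) (S (S j)) - z0 * (c m * Cpow (z m) (S j)))).
    - rewrite sumL_sub sumL_scal !Hs. ring.
    - move=> m _. rewrite /c' !Cpow_S. ring. }
  rewrite (sumL_split _ p) in E.
  rewrite (sumL_zero (l := u)) in E.
  - move: E. rewrite Cplus_0_r. done.
  - move=> m /Hu [_ Ez]. rewrite /c' /= Ez. ring. }
have IH1 : sumL t' (fun m => c' m * (d m / (z m - z0))) = RtoC 0.
{ apply (IH t' c' z (fun m => d m / (z m - z0))) => //.
  - move=> m /Ht' [Hm _]; by apply Hz.
  - move=> m m' /Ht' [Hm _] /Ht' [Hm' _] E. rewrite (Hd m m') // E //. }
have IH2 : sumL t' (fun m => c' m * (z m / (z m - z0))) = RtoC 0.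
{ apply (IH t' c' z (fun m => z m / (z m - z0))) => //.
  - move=> m /Ht' [Hm _]; by apply Hz.
  - move=> m m' /Ht' [Hm _] /Ht' [Hm' _] E. by rewrite E. }
rewrite (sumL_ext (l := t') (g := fun m => c m * d m)) in IH1; last first.
{ move=> m /Ht' [_ nz]. rewrite /c'. field. done. }
rewrite (sumL_ext (l := t') (g := fun m => c m * z m)) in IH2; last first.
{ move=> m /Ht' [_ nz]. rewrite /c'. field. done. }
have H0 := Hs 0%nat.
rewrite (sumL_ext (g := fun m => c m * z m)) in H0; last first.
{ move=> m _. rewrite Cpow_S /=. ring. }
rewrite (sumL_split _ p) -/t' -/u IH2 Cplus_0_l in H0.
rewrite (sumL_ext (l := u) (g := fun m => z0 * c m)) in H0; last first.
{ move=> m /Hu [_ ->]. ring. }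
rewrite sumL_scal in H0.
have Hz0 : z0 <> RtoC 0 by apply Hz; left.
have Hc : sumL u c = RtoC 0.
{ have -> : sumL u c = / z0 * (z0 * sumL u c) by field.
  rewrite H0. ring. }
rewrite (sumL_split _ p) -/t' -/u IH1 Cplus_0_l.
rewrite (sumL_ext (l := u) (g := fun m => d h * c m)).
- rewrite sumL_scal Hc. ring.
- move=> m /Hu [Hm E]. rewrite (Hd m h) //; [ring|left=>//].
Qed.
Lemma min_pos n (f : 'I_n -> R) : (forall k, 0 < f k)%R -> exists e, (0 < e)%R /\ forall k, (e <= f k)%R.
Proof.
move=> H.
suff: forall s : seq 'I_n, exists e, (0 < e)%R /\ forall k, k \in s -> (e <= f k)%R.
{ move=> /(_ (enum 'I_n)) [e [He Hk]]. exists e; split => // k. apply Hk. by rewrite mem_enum. }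
elim => [|h t [e [He Hk]]].
- exists 1%R; split => //; lra.
- exists (Rmin e (f h)). split; first by apply Rmin_pos => //; apply H.
  move=> k; rewrite in_cons => /orP [/eqP -> | Hin].
  + apply Rmin_r.
  + apply Rle_trans with e; [apply Rmin_l | by apply Hk].
Qed.
Lemma evalp_Phi n (lam : 'I_n -> R) (q : cpoly n) z t :
  evalp q (Phi lam z t) = sumL q (fun m => eval_mono m z *
     cexp (- RtoC (wt lam m.2.1) * t) * cexp (- RtoC (wt lam m.2.2) * Cconj t)).
Proof. rewrite evalpE. apply sumL_ext => m _. apply mono_Phi. Qed.

Lemma wt_ge0 n (lam : 'I_n -> R) a : (forall k, 0 < lam k)%R -> (0 <= wt lam a)%R.
Proof.
move=> H. apply sumR_ge0 => k. apply Rmult_le_pos; [left; apply H | apply pos_INR].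
Qed.

Lemma Zind_inj n (lam : 'I_n -> R) a a' : Z_indep lam -> wt lam a = wt lam a' -> a = a'.
Proof.
move=> Hi E. apply functional_extensionality => k.
have S : sumR (fun k => (IZR (Z.of_nat (a k) - Z.of_nat (a' k)) * lam k)%R) = 0%R.
{ have -> : sumR (fun k => (IZR (Z.of_nat (a k) - Z.of_nat (a' k)) * lam k)%R) = (wt lam a - wt lam a')%R.
  { unfold sumR, wt. apply (big_rec3 (fun x y z => x = y - z)%R); first ring.
    move=> i y1 y2 y3 _ ->. rewrite minus_IZR -!INR_IZR_INZ. ring. }
  rewrite E. ring. }
have := Hi _ S k. lia.
Qed.

Lemma bound n (lam : 'I_n -> R) (q : cpoly n) :
  exists M, (0 <= M)%R /\ forall m, List.In m q -> (wt lam m.2.1 + wt lam m.2.2 <= M)%R.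
Proof.
elim: q => [|h t [M [HM Hm]]].
- exists 0%R; split => //; lra.
- exists (Rmax M (wt lam h.2.1 + wt lam h.2.2)). split.
  + apply Rle_trans with M => //; apply Rmax_l.
  + move=> m [<-|Hin]; first apply Rmax_r. apply Rle_trans with M; [by apply Hm | apply Rmax_l].
Qed.

Lemma IZR_small (k : Z) : (Rabs (IZR k * PI) < 1)%R -> k = 0%Z.
Proof.
move=> H. have P := PI2_1. destruct k as [|p|p] => //; exfalso.
- have : (1 <= IZR (Z.pos p))%R by apply IZR_le; lia.
  move=> H1. rewrite Rabs_right in H; [nra | apply Rle_ge; nra].
- have : (IZR (Z.neg p) <= -1)%R by apply IZR_le; lia.
  move=> H1. rewrite Rabs_left in H; nra.
Qed.

Lemma zeta_inj (A B A' B' M : R) :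
  (0 <= A)%R -> (0 <= B)%R -> (0 <= A')%R -> (0 <= B')%R -> (A + B <= M)%R -> (A' + B' <= M)%R ->
  let u := ((1%R, / (2 * M + 1))%R : C) in
  cexp (- RtoC A * u - RtoC B * Cconj u) = cexp (- RtoC A' * u - RtoC B' * Cconj u) ->
  A = A' /\ B = B'.
Proof.
move=> hA hB hA' hB' hM hM' u E.
have th : (0 < / (2 * M + 1))%R by apply Rinv_0_lt_compat; lra.
have [E1 E2] := cexp_inj E. simpl in E1, E2.
have [k Hk] := sin_eq_0_0 _ E2.
have k0 : k = 0%Z.
{ apply IZR_small. rewrite -Hk.
  set th' := (/ (2 * M + 1))%R in th *.
  match goal with |- (Rabs ?X < 1)%R => have -> : X = ((B - A - B' + A') * th')%R by (rewrite /th'; ring) end.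
  have Hth : (th' * (2 * M + 1) = 1)%R by rewrite /th'; field; lra.
  rewrite Rabs_mult (Rabs_right th'); last lra.
  have : (Rabs (B - A - B' + A') <= 2 * M)%R by apply Rabs_le; lra.
  nra. }
subst k.
have : ((B - A - B' + A') * / (2 * M + 1) = 0)%R.
{ have -> : 0%R = (IZR 0 * PI)%R by ring. rewrite -Hk /u /=. ring. }
move=> /Rmult_integral [H|H]; last lra.
split; lra.
Qed.
Lemma Cconj_nz a : a <> RtoC 0 -> Cconj a <> RtoC 0.
Proof.
move=> H E. apply H. destruct a as [x y]. unfold Cconj in E; simpl in E. injection E => E2 E1.
apply Ceq; simpl; lra.
Qed.

Lemma mono_nz n (z : Cn n) (e : ('I_n -> nat) * ('I_n -> nat)) :
  (forall k, z k <> RtoC 0) ->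
  prodC (fun k => Cpow (z k) (e.1 k) * Cpow (Cconj (z k)) (e.2 k)) <> RtoC 0.
Proof.
move=> H. apply prodC_nz => k. apply Cmult_neq_0; apply Cpow_nz => //. by apply Cconj_nz.
Qed.

Lemma sumR_zero n : sumR (fun _ : 'I_n => 0%R) = 0%R.
Proof. unfold sumR. apply (big_rec (fun a => a = 0%R)) => //. move=> *; subst; ring. Qed.

Lemma distC_refl n (x : Cn n) : distC x x = 0%R.
Proof.
unfold distC, normsq.
have -> : (fun k => Cmod (x k - x k) ^ 2)%R = (fun _ : 'I_n => 0%R).
{ apply functional_extensionality => k. have -> : x k - x k = RtoC 0 by ring. rewrite Cmod_0. ring. }
rewrite sumR_zero. apply sqrt_0.
Qed.

Lemma part1 n (lam : 'I_n -> R) (Hpos : forall k, (0 < lam k)%R) (F : Cn n -> Prop)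
  (HF : forall z, F z -> sphere z) (Hi : Z_indep lam) (w : Cn n) (Hw : closure F w)
  (Hnz : forall k, w k <> RtoC 0) : nonsparse lam F w.
Proof.
move=> V HV Vw q d1 d2 qh _ Hvan y.
have [e1 [He1 Hball]] := HV w Vw.
have [e2 [He2 Hmin]] := @min_pos n (fun k => Cmod (w k)) (fun k => proj1 (Cmod_gt_0 _) (Hnz k)).
have [x [Fx dx]] := Hw (Rmin e1 e2) (Rmin_pos _ _ He1 He2).
have Vx : V x by apply Hball; apply Rlt_le_trans with (Rmin e1 e2) => //; apply Rmin_l.
have xnz : forall k, x k <> RtoC 0.
{ move=> k E. have := Cmod_le_dist x w k. rewrite E.
  have -> : Cminus (RtoC 0) (w k) = Copp (w k) by ring. rewrite Cmod_opp.
  have := Hmin k. have := Rmin_r e1 e2. lra. }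
have clx : closure F x.
{ move=> eps He. exists x; split => //. by rewrite distC_refl. }
have qx0 : evalp q x = RtoC 0 := Hvan x clx (HF x Fx) Vx.
have orbit : forall t, Hplane t -> evalp q (Phi lam x t) = RtoC 0.
{ move=> t Ht. rewrite qh // qx0. ring. }
have [M [HM HMb]] := bound lam q.
set u := ((1%R, / (2 * M + 1))%R : C).
set zeta := fun m : C * (('I_n -> nat) * ('I_n -> nat)) =>
   cexp (- RtoC (wt lam m.2.1) * u - RtoC (wt lam m.2.2) * Cconj u).
set P := fun (m : C * (('I_n -> nat) * ('I_n -> nat))) (z : Cn n) => eval_mono (RtoC 1, m.2) z.
have key : sumL q (fun m => eval_mono m x * (P m y / P m x)) = RtoC 0.
{ apply (@vdm _ (List.length q) q (fun m => eval_mono m x) zeta (fun m => P m y / P m x)).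
  - lia.
  - move=> m _. apply cexp_nz.
  - move=> m m' Hm Hm' E.
    have [EA EB] : wt lam m.2.1 = wt lam m'.2.1 /\ wt lam m.2.2 = wt lam m'.2.2.
    { apply (zeta_inj (M := M)); try apply wt_ge0 => //; try apply HMb => //. exact E. }
    have e1' := Zind_inj Hi EA. have e2' := Zind_inj Hi EB.
    have : m.2 = m'.2.
    { destruct m as [c [a b]], m' as [c' [a' b']]; simpl in *; by subst. }
    rewrite /P => ->. done.
  - move=> j. have := orbit (RtoC (INR (S j)) * u).
    rewrite evalp_Phi => <-.
    + apply sumL_ext => m _. rewrite /zeta cexp_pow -Cmult_assoc -cexp_add. f_equal. f_equal.
      apply Ceq; simpl; ring.
    + have h := lt_0_INR (S j) (Nat.lt_0_succ j). rewrite /Hplane /u /Cmult /RtoC. cbn [fst snd]. lra. }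
rewrite evalpE -key. apply sumL_ext => m _. rewrite /P /eval_mono /=.
have := mono_nz (e := m.2) xnz. move=> nz. field. done.
Qed.
Lemma CmultA : associative Cmult. Proof. move=> *; ring. Qed.
Lemma Cmult1l : left_id (RtoC 1) Cmult. Proof. move=> *; ring. Qed.
Lemma CmultC : commutative Cmult. Proof. move=> *; ring. Qed.
HB.instance Definition _ := Monoid.isComLaw.Build C (RtoC 1) Cmult CmultA CmultC Cmult1l.

Lemma prodC_zero n (f : 'I_n -> C) k : f k = RtoC 0 -> prodC f = RtoC 0.
Proof. move=> H. unfold prodC. rewrite (bigD1 k) //= H. ring. Qed.

Lemma prodC_one n (f : 'I_n -> C) : (forall k, f k = RtoC 1) -> prodC f = RtoC 1.
Proof.
move=> H. unfold prodC. apply (big_rec (fun a => a = RtoC 1)) => //. move=> i x _ ->. rewrite H. ring.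
Qed.

Lemma sumR_const n c : sumR (fun _ : 'I_n => c) = (INR n * c)%R.
Proof.
unfold sumR. rewrite big_const_ord. elim: n => [|n IH]; first (simpl; ring). rewrite iterS IH S_INR. ring.
Qed.

Lemma closure_single n (z0 z : Cn n) : closure (fun x => x = z0) z -> z = z0.
Proof.
move=> H. have D : distC z0 z = 0%R.
{ have := sqrt_pos (normsq (fun k => z0 k - z k)). rewrite -/(distC z0 z) => Hp.
  destruct Hp as [Hp|Hp]; last done. exfalso. have [x [Ex Hx]] := H _ Hp. subst x. lra. }
apply functional_extensionality => k. have := Cmod_le_dist z0 z k. rewrite D => Hk.
have : Cmod (Cminus (z0 k) (z k)) = 0%R by have := Cmod_ge_0 (Cminus (z0 k) (z k)); lra.
move=> /Cmod_eq_0 E. have -> : z k = Cminus (z0 k) (Cminus (z0 k) (z k)) by ring.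
rewrite E. ring.
Qed.

Lemma wt0 n (lam : 'I_n -> R) : wt lam (fun _ => 0%nat) = 0%R.
Proof.
unfold wt. have -> : (fun k => lam k * INR 0)%R = (fun _ : 'I_n => 0%R).
{ apply functional_extensionality => k /=. ring. }
apply sumR_zero.
Qed.

Lemma qh_crit n (lam : 'I_n -> R) (q : cpoly n) d1 d2 :
  (forall m, List.In m q -> wt lam m.2.1 = d1 /\ wt lam m.2.2 = d2) -> quasi_hom lam q d1 d2.
Proof.
move=> H t z _. rewrite evalp_Phi evalpE -sumL_scal. apply sumL_ext => m Hm.
have [-> ->] := H m Hm. ring.
Qed.

Lemma wt_zero n (lam : 'I_n -> R) (a : 'I_n -> nat) : (forall k, 0 < lam k)%R ->
  wt lam a = 0%R -> forall k, a k = 0%nat.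
Proof.
move=> Hp E k. have := @sumR_term n (fun k => lam k * INR (a k))%R k.
rewrite -/(wt lam a) E => H.
have H1 : (lam k * INR (a k) <= 0)%R.
{ apply H => i. apply Rmult_le_pos; [left; apply Hp | apply pos_INR]. }
have := Hp k. have := pos_INR (a k). move=> h1 h2.
have : (INR (a k) <= 0)%R by nra. move=> h3.
apply INR_eq. simpl. lra.
Qed.
From Stdlib Require Import Classical.

Lemma part2 n (Hn : (0 < n)%N) (lam : 'I_n -> R) (Hpos : forall k, (0 < lam k)%R)
  (Hd : ~ Z_indep lam) :
     exists G : Cn n -> Prop, (forall z, G z -> sphere z) /\
       (forall z, closure G z -> ~ nonsparse lam G z) /\
       S0 lam G (fun k => RtoC (exp (- lam k) / sqrt (INR n))).
Proof.
have [m [Sm [k1 Hk1]]] : exists m : 'I_n -> Z,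
   sumR (fun k => (IZR (m k) * lam k)%R) = 0%R /\ exists k, m k <> 0%Z.
{ apply NNPP => C. apply Hd => m Sm k. apply NNPP => Hk. apply C. exists m; split => //. by exists k. }
set a := fun k => Z.to_nat (m k).
set b := fun k => Z.to_nat (- m k).
have Eab : wt lam a = wt lam b.
{ have : sumR (fun k => (IZR (m k) * lam k)%R) = (wt lam a - wt lam b)%R.
  { unfold sumR, wt. apply (big_rec3 (fun x y z => x = y - z)%R); first ring.
    move=> i y1 y2 y3 _ ->. rewrite /a /b !INR_IZR_INZ.
    have -> : IZR (m i) = (IZR (Z.of_nat (Z.to_nat (m i))) - IZR (Z.of_nat (Z.to_nat (- m i))))%R.
    { rewrite -minus_IZR. f_equal. lia. }
    ring. }
  rewrite Sm. lra. }
set D := wt lam a.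
have DNZ : D <> 0%R.
{ move=> E. have ha := wt_zero Hpos E k1. have E' : wt lam b = 0%R by rewrite -Eab; exact E. have hb := wt_zero Hpos E' k1.
  rewrite /a /b in ha hb. lia. }
have [k0 Hk0] : exists k0, (0 < b k0)%coq_nat.
{ apply NNPP => C. apply DNZ. suff Hb : wt lam b = 0%R by rewrite /D Eab.
  have -> : b = (fun _ => 0%nat).
  { apply functional_extensionality => k. apply NNPP => Hb. apply C. exists k. lia. }
  apply wt0. }
have a0 : a k0 = 0%nat by rewrite /a; rewrite /b in Hk0; lia.
set c := (/ sqrt (INR n))%R.
have nR : (0 < INR n)%R by apply lt_0_INR; apply/ltP.
have sq : (0 < sqrt (INR n))%R by apply sqrt_lt_R0.
have cpos : (0 < c)%R by apply Rinv_0_lt_compat.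
set z0 : Cn n := fun _ => RtoC c.
have z0nz : forall k, z0 k <> RtoC 0.
{ move=> k E. injection E. lra. }
set PA := fun z : Cn n => prodC (fun k => Cpow (z k) 0 * Cpow (Cconj (z k)) (a k)).
set PB := fun z : Cn n => prodC (fun k => Cpow (z k) 0 * Cpow (Cconj (z k)) (b k)).
set q : cpoly n := [:: (PB z0, (fun _ => 0%nat, a)); (- PA z0, (fun _ => 0%nat, b))].
have evq : forall z, evalp q z = PB z0 * PA z + (- PA z0 * PB z + RtoC 0) by [].
have bnz : PB z0 <> RtoC 0 by apply (mono_nz (e := (fun _ => 0%nat, b)) z0nz).
exists (fun z => z = z0). split; [|split].
- move=> z ->. unfold sphere, normsq.
  have -> : (fun k => Cmod (z0 k) ^ 2)%R = (fun _ : 'I_n => / INR n)%R.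
  { apply functional_extensionality => k. rewrite /z0 Cmod_R Rabs_right; last lra.
    rewrite /c pow_inv pow2_sqrt //. lra. }
  rewrite sumR_const. field. lra.
- move=> z /closure_single -> Hns.
  set xs : Cn n := fun k => if (0 < a k)%N then RtoC 1 else RtoC 0.
  have := Hns (fun _ => True) _ I q 0%R D _ DNZ _ xs.
  rewrite evq.
  have -> : PA xs = RtoC 1.
  { apply prodC_one => k. rewrite /xs. case: (ltnP 0 (a k)) => H.
    - have -> : Cconj (RtoC 1) = RtoC 1 by apply Ceq; simpl; ring.
      rewrite !Cpow_1_l. ring.
    - have -> : a k = 0%nat by move: H; case: (a k).
      change (Cpow (RtoC 0) 0 * Cpow (Cconj (RtoC 0)) 0 = RtoC 1). simpl Cpow. ring. }
  have -> : PB xs = RtoC 0.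
  { apply (prodC_zero (k := k0)). rewrite /xs a0 /=.
    have -> : Cconj (RtoC 0) = RtoC 0 by apply Ceq; simpl; ring.
    destruct (b k0) as [|bb]; first lia. simpl. ring. }
  move=> H. apply bnz. have -> : PB z0 = PB z0 * RtoC 1 + (- PA z0 * RtoC 0 + RtoC 0) by ring.
  apply H.
  + move=> x _. exists 1%R. split; [lra | done].
  + apply qh_crit => mm [<-|[<-|[]]] /=; rewrite wt0; split => //; rewrite /D ?Eab //.
  + move=> x /closure_single -> _ _. rewrite evq. ring.
- exists z0, (RtoC 1). split; [done|split; [rewrite /Hplane /=; lra|]].
  apply functional_extensionality => k. rewrite /Phi /z0 /c.
  have -> : - RtoC (lam k) * RtoC 1 = RtoC (- lam k) by apply Ceq; simpl; ring.
  unfold cexp. apply Ceq; simpl; rewrite ?cos_0 ?sin_0; field; lra.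
Qed.

Theorem proposition3p3 (n : nat) (Hn : (0 < n)%N) (lam : 'I_n -> R) :
  lam (Ordinal Hn) = 1%R -> (forall k, (0 < lam k)%R) ->
  (forall F : Cn n -> Prop, (forall z, F z -> sphere z) -> (exists z, F z) ->
     Z_indep lam ->
     forall w : Cn n, closure F w -> (forall k, w k <> RtoC 0) -> nonsparse lam F w)
  /\
  (~ Z_indep lam ->
     exists G : Cn n -> Prop, (forall z, G z -> sphere z) /\
       (forall z, closure G z -> ~ nonsparse lam G z) /\
       S0 lam G (fun k => RtoC (exp (- lam k) / sqrt (INR n)))).
Proof.
move=> _ Hpos. split.
- move=> F HF _ Hi w Hw Hnz. exact: part1.
- move=> Hd. exact: part2.
Qed.
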